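(* Let $\Sigma=(V,E,c)$ be an undirected network with exactly three boundary vertices $A_1,A_2,A_3$. Then $\Sigma$ decomposes into three subnetworks $\Sigma_{ij}=(V,E,c_{ij})$, $1\le i<j\le 3$ (i.e. $\sum_{i<j}c_{ij}^e=c^e$ for all $e\in E$ with each $c_{ij}\ge 0$), such that for each $i<j$ $$S_{\Sigma_{ij}}(A_i)=S_{\Sigma_{ij}}(A_j)=\tfrac12 I(A_i:A_j),\qquad S_{\Sigma_{ij}}(A_k)=0\ \ (k\neq i,j),$$ where $I(A_i:A_j)=S_\Sigma(A_i)+S_\Sigma(A_j)-S_\Sigma(A_iA_j)$. In particular, $\Sigma_{ij}$ connects only $A_i$ and $A_j$ (no other pair of distinct boundary vertices is joined by a path of positive-capacity edges in $\Sigma_{ij}$), $\sum_{i<j}S_{\Sigma_{ij}}(A_k)=S_\Sigma(A_k)$ for every $k$, and the $A_i:A_j$ mutual information computed on $\Sigma_{ij}$ equals that computed on $\Sigma$.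
   Context: An undirected network $\Sigma=(V,E,c)$ is a finite graph with capacity function $c:E\to\mathbb R_{\ge0}$ and a designated set $\partial\Sigma\subset V$ of boundary vertices. Fix an arbitrary orientation of each edge; a flow is a function $v:E\to\mathbb R$ with $|v^e|\le c^e$ for all $e$ and with conservation at every non-boundary vertex (net flow into the vertex equals net flow out, negative values meaning flow against the chosen orientation). Extending $v$ to reversed edges by $v^{\tilde e}=-v^e$, the flux of $v$ out of $A\subset\partial\Sigma$ is $S_\Sigma(A;v)=\sum_{e\in E\sqcup\tilde E:\,s(e)\in A}v^e$, and $S_\Sigma(A)$ is the maximum of $S_\Sigma(A;v)$ over all flows. A subnetwork of $\Sigma$ is a network $(V,E,c_1)$ with $0\le c_1\le c$ edgewise and the same boundary; $\Sigma$ decomposes into subnetworks $(V,E,c_i)$ if their capacities sum to $c$ on every edge. Here $A_iA_j$ denotes the boundary set $\{A_i,A_j\}$. *)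

(* Defs.v *)
From HB Require Import structures.
From mathcomp Require Import all_boot all_order all_algebra.
From mathcomp Require Import boolp classical_sets reals.
Set Implicit Arguments. Unset Strict Implicit. Unset Printing Implicit Defensive.
Import Order.TTheory GRing.Theory Num.Theory.
Local Open Scope ring_scope.
Local Open Scope classical_set_scope.

(* An undirected network: vertices V, edges E (each with an arbitrary fixed
   orientation src e -> tgt e), capacity c, boundary set bd. *)
Section Network.
Variables (R : realType) (V E : finType) (src tgt : E -> V).

Definition is_flow (bd : {set V}) (c : E -> R) (v : E -> R) : Prop :=
  (forall e, `|v e| <= c e) /\
  (forall x, x \notin bd ->
     \sum_(e | tgt e == x) v e = \sum_(e | src e == x) v e).

(* S(A; v): sum over oriented and reversed edges starting in A,
   with v^{reversed e} = - v^e *)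
Definition flux (A : {set V}) (v : E -> R) : R :=
  \sum_(e | src e \in A) v e + \sum_(e | tgt e \in A) - v e.

Definition maxflux (bd : {set V}) (c : E -> R) (A : {set V}) : R :=
  sup [set flux A v | v in is_flow bd c].

Definition mutinf (bd : {set V}) (c : E -> R) (x y : V) : R :=
  maxflux bd c [set x] + maxflux bd c [set y] - maxflux bd c [set x; y].

Definition padj (c : E -> R) : rel V :=
  fun x y => [exists e, (0 < c e) &&
    (((src e == x) && (tgt e == y)) || ((src e == y) && (tgt e == x)))].

End Network.

(* Main.v *)
Require Import Defs.
From HB Require Import structures.
From mathcomp Require Import all_boot all_order all_algebra.
From mathcomp Require Import boolp classical_sets reals.
From mathcomp Require Import lra.
Set Implicit Arguments. Unset Strict Implicit. Unset Printing Implicit Defensive.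
Import Order.TTheory GRing.Theory Num.Theory.
Local Open Scope ring_scope.

Section Basic.
Variables (R : realType) (V E : finType) (src tgt : E -> V).

Definition kf (X : {set V}) (e : E) : R := (src e \in X)%:R - (tgt e \in X)%:R.
Definition cut (c : E -> R) (X : {set V}) : R :=
  \sum_e ((src e \in X) != (tgt e \in X))%:R * c e.

Lemma fluxE X (v : E -> R) : flux src tgt X v = \sum_e kf X e * v e.
Proof.
rewrite /flux big_mkcond [X in _ + X]big_mkcond -big_split /=.
apply: eq_bigr => e _; rewrite /kf.
by case: (src e \in X); case: (tgt e \in X); rewrite /= !(mul1r, mul0r, subr0, sub0r, subrr, addr0, add0r, mulN1r).
Qed.

Lemma flux_lin X a b (v w : E -> R) :
  flux src tgt X (fun e => a * v e + b * w e) = a * flux src tgt X v + b * flux src tgt X w.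
Proof.
rewrite !fluxE !mulr_sumr -big_split /=; apply: eq_bigr => e _; lra.
Qed.

Lemma fluxN X (v : E -> R) : flux src tgt X (fun e => - v e) = - flux src tgt X v.
Proof. rewrite !fluxE -sumrN; apply: eq_bigr => e _; lra. Qed.

Lemma flux1 x (v : E -> R) :
  flux src tgt [set x] v = \sum_(e | src e == x) v e - \sum_(e | tgt e == x) v e.
Proof.
rewrite /flux sumrN; congr (_ - _); apply: eq_bigl => e; by rewrite inE.
Qed.

Lemma sum_indic (X : {set V}) y : \sum_(x in X) (y \in [set x])%:R = (y \in X)%:R :> R.
Proof.
under eq_bigr => x _ do rewrite inE.
case: (boolP (y \in X)) => yX.
  rewrite (bigD1 y) //= eqxx big1 ?addr0 // => x /andP[_ /negbTE]; by rewrite eq_sym => ->.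
by rewrite big1 // => x xX; case: eqP => // eyx; rewrite eyx xX in yX.
Qed.

Lemma flux_part X (v : E -> R) : flux src tgt X v = \sum_(x in X) flux src tgt [set x] v.
Proof.
rewrite fluxE.
under [RHS]eq_bigr => x _ do rewrite fluxE.
rewrite exchange_big /=; apply: eq_bigr => e _.
rewrite -mulr_suml; congr (_ * _).
by rewrite /kf sumrB !sum_indic.
Qed.

Lemma cross_kf (X : {set V}) e (v c : E -> R) : `|v e| <= c e ->
  kf X e * v e <= ((src e \in X) != (tgt e \in X))%:R * c e.
Proof.
move=> /[dup] H; rewrite ler_norml => /andP[H1 H2]; have c0 : 0 <= c e by apply: le_trans H.
rewrite /kf; case: (src e \in X); case: (tgt e \in X) => /=; lra.
Qed.

Lemma flux_le_cut X (v c : E -> R) : (forall e, `|v e| <= c e) ->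
  flux src tgt X v <= cut c X.
Proof. by move=> H; rewrite fluxE /cut; apply: ler_sum => e _; apply: cross_kf. Qed.

Lemma cut_le X (c1 c2 : E -> R) : (forall e, c1 e <= c2 e) -> cut c1 X <= cut c2 X.
Proof.
move=> H; rewrite /cut; apply: ler_sum => e _.
case: (_ != _); rewrite /= ?mul1r ?mul0r //; exact: H.
Qed.

Lemma cutD X (c1 c2 : E -> R) : cut (fun e => c1 e + c2 e) X = cut c1 X + cut c2 X.
Proof. by rewrite /cut -big_split; apply: eq_bigr => e _; rewrite mulrDr. Qed.

Lemma cut_ge0 X (c : E -> R) : (forall e, 0 <= c e) -> 0 <= cut c X.
Proof.
move=> H; rewrite /cut; apply: sumr_ge0 => e _.
case: (_ != _); rewrite /= ?mul1r ?mul0r //; exact: H.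
Qed.

Lemma cutC (X : {set V}) (c : E -> R) : cut c (~: X) = cut c X.
Proof.
rewrite /cut; apply: eq_bigr => e _; rewrite !inE.
by case: (src e \in X); case: (tgt e \in X).
Qed.

Lemma cut_union (X Y : {set V}) (c : E -> R) : (forall e, 0 <= c e) ->
  cut c (X :|: Y) <= cut c X + cut c Y.
Proof.
move=> H; rewrite /cut -big_split; apply: ler_sum => e _; rewrite !inE.
have := H e.
case: (src e \in X); case: (tgt e \in X); case: (src e \in Y); case: (tgt e \in Y) => /=; lra.
Qed.

Lemma cut_zero (X : {set V}) (c : E -> R) :
  (forall e, (src e \in X) != (tgt e \in X) -> c e = 0) -> cut c X = 0.
Proof.
move=> H; rewrite /cut big1 // => e _.
by case: (boolP (_ != _)) => [/H -> | _]; rewrite ?mulr0 ?mul0r.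
Qed.

Lemma cut_eq0 (X : {set V}) (c : E -> R) : (forall e, 0 <= c e) -> cut c X <= 0 ->
  forall e, (src e \in X) != (tgt e \in X) -> c e = 0.
Proof.
move=> H0 H e He.
have ge : forall e, true -> 0 <= ((src e \in X) != (tgt e \in X))%:R * c e.
  by move=> e' _; apply: mulr_ge0 => //; exact: ler0n.
have /psumr_eq0P P : cut c X = 0 by apply/le_anti; rewrite H cut_ge0.
by have := P ge e isT; rewrite He mul1r.
Qed.

Lemma flux_setT (v : E -> R) : flux src tgt [set: V]%SET v = 0.
Proof. by rewrite fluxE big1 // => e _; rewrite /kf !inE subrr mul0r. Qed.

Definition cons (bd : {set V}) (v : E -> R) :=
  forall x, x \notin bd -> flux src tgt [set x] v = 0.

Lemma is_flowP bd (c v : E -> R) :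
  is_flow src tgt bd c v <-> (forall e, `|v e| <= c e) /\ cons bd v.
Proof.
split => [[H1 H2]|[H1 H2]]; split => // x xb.
  by rewrite flux1 H2 // subrr.
by have := H2 x xb; rewrite flux1 => /eqP; rewrite subr_eq0 => /eqP ->.
Qed.


Definition dsum (d : V -> R) (X : {set V}) : R := \sum_x (x \in X)%:R * d x.
Definition restr (F : {set E}) (c : E -> R) e : R := if e \in F then c e else 0.

Lemma dsum1 d x : dsum d [set x] = d x.
Proof.
rewrite /dsum (bigD1 x) //= inE eqxx mul1r big1 ?addr0 // => y /negbTE yx.
by rewrite inE yx mul0r.
Qed.

Lemma dsumC d X : dsum d (~: X) = \sum_x d x - dsum d X.
Proof.
rewrite /dsum -sumrB; apply: eq_bigr => x _; rewrite inE.
by case: (x \in X) => /=; lra.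
Qed.

Lemma dsum_sub d X Y : dsum d X + dsum d Y = dsum d (X :&: Y) + dsum d (X :|: Y).
Proof.
rewrite /dsum -!big_split; apply: eq_bigr => x _ /=; rewrite !inE.
by case: (x \in X); case: (x \in Y) => /=; lra.
Qed.

Lemma sum_pick (e : E) (a : R) : \sum_e' (e' == e)%:R * a = a.
Proof.
rewrite (bigD1 e) //= eqxx mul1r big1 ?addr0 // => e' /negbTE ->; by rewrite mul0r.
Qed.

Lemma cut_submod (c : E -> R) e (X Y : {set V}) : (forall e, 0 <= c e) ->
  src e \in X -> src e \notin Y -> tgt e \in Y -> tgt e \notin X ->
  cut c (X :&: Y) + cut c (X :|: Y) + 2 * c e <= cut c X + cut c Y.
Proof.
move=> H0 sX sY tY tX.
rewrite -(sum_pick e (2 * c e)) /cut -!big_split /=.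
apply: ler_sum => e' _; rewrite !inE; have := H0 e'.
case: (eqVneq e' e) => [->|_].
  rewrite (negbTE sY) (negbTE tX) sX tY /=; lra.
case: (src e' \in X); case: (tgt e' \in X); case: (src e' \in Y); case: (tgt e' \in Y) => /=; lra.
Qed.


Lemma sum_indic2 (X : {set V}) y :
  \sum_x (x \in X)%:R * (y \in [set x])%:R = (y \in X)%:R :> R.
Proof.
rewrite (bigD1 y) //= inE eqxx mulr1 big1 ?addr0 // => x /negbTE yx.
by rewrite inE eq_sym yx mulr0.
Qed.

Lemma kf_sum (X : {set V}) e : \sum_x (x \in X)%:R * kf [set x] e = kf X e.
Proof.
rewrite /kf; under eq_bigr => x _ do rewrite mulrBr.
by rewrite sumrB !sum_indic2.
Qed.

Lemma restr_split (F : {set E}) (c : E -> R) e : e \in F ->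
  forall e', restr F c e' = restr (F :\ e) c e' + (e' == e)%:R * c e.
Proof.
move=> eF e'; rewrite /restr !inE; case: (eqVneq e' e) => [->|ne] /=.
  by rewrite eF mul1r add0r.
by rewrite mul0r addr0.
Qed.

Lemma cut_restr (F : {set E}) (c : E -> R) e (X : {set V}) : e \in F ->
  cut (restr F c) X = cut (restr (F :\ e) c) X + ((src e \in X) != (tgt e \in X))%:R * c e.
Proof.
move=> eF; rewrite /cut.
under eq_bigr => e' _ do rewrite (restr_split c eF) mulrDr.
rewrite big_split /=; congr (_ + _).
rewrite (bigD1 e) //= eqxx mul1r big1 ?addr0 // => e' /negbTE ->.
by rewrite mul0r mulr0.
Qed.

Lemma flux_pick (X : {set V}) (v : E -> R) e a :
  flux src tgt X (fun e' => v e' + (e' == e)%:R * a) = flux src tgt X v + kf X e * a.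
Proof.
rewrite !fluxE; under eq_bigr => e' _ do rewrite mulrDr.
rewrite big_split /=; congr (_ + _).
rewrite (bigD1 e) //= eqxx mul1r big1 ?addr0 // => e' /negbTE ->.
by rewrite mul0r mulr0.
Qed.

Lemma gale (c : E -> R) : (forall e, 0 <= c e) -> forall n (F : {set E}), #|F| = n ->
  forall d : V -> R, \sum_x d x = 0 -> (forall X, dsum d X <= cut (restr F c) X) ->
  exists v : E -> R, (forall e, `|v e| <= restr F c e) /\
     forall x, flux src tgt [set x] v = d x.
Proof.
move=> c0; elim=> [|n IH] F HF d d0 Hd.
  have F0 : F = finset.set0 by apply/cards0_eq.
  have cz : forall X, cut (restr F c) X = 0.
    by move=> X; apply: cut_zero => e _; rewrite /restr F0 inE.
  exists (fun _ => 0); split.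
    by move=> e; rewrite normr0 /restr F0 inE.
  move=> x; have h1 := Hd [set x]; rewrite dsum1 cz in h1.
  have h2 := Hd (~: [set x]); rewrite dsumC d0 dsum1 cz in h2.
  rewrite fluxE big1; [lra | by move=> e _; rewrite mulr0].
have [e eF] : exists e, e \in F by apply/set0Pn; rewrite -card_gt0 HF.
have HF' : #|F :\ e| = n by move: HF; rewrite (cardsD1 e F) eF add1n => -[].
set cF := restr F c.
have cF0 : forall e, 0 <= cF e by move=> e'; rewrite /cF /restr; case: (_ \in _).
have cFe : cF e = c e by rewrite /cF /restr eF.
have ce0 := c0 e.
pose L := \big[Num.max/ - c e]_(X : {set V} | (src e \in X) && (tgt e \notin X))
            (c e + dsum d X - cut cF X).
pose U := \big[Num.min/ c e]_(Y : {set V} | (tgt e \in Y) && (src e \notin Y))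
            (cut cF Y - dsum d Y - c e).
have LU : L <= U.
  apply: bigmax_le.
    apply: le_bigmin; first lra.
    by move=> Y /andP[wY uY]; have := Hd Y; lra.
  move=> X /andP[uX wX]; apply: le_bigmin.
    by have := Hd X; lra.
  move=> Y /andP[wY uY].
  have := cut_submod cF0 uX uY wY wX.
  have := Hd (X :&: Y); have := Hd (X :|: Y); have := dsum_sub d X Y; rewrite cFe; lra.
have Lge : - c e <= L by apply: bigmax_ge_id.
have Ule : U <= c e by apply: bigmin_le_id.
pose d' x := d x - kf [set x] e * L.
have dsum' : forall X, dsum d' X = dsum d X - kf X e * L.
  move=> X; rewrite /dsum /d' -kf_sum mulr_suml -sumrB; apply: eq_bigr => x _; lra.
have [v' [Hv'1 Hv'2]] : exists v' : E -> R, (forall e', `|v' e'| <= restr (F :\ e) c e') /\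
     forall x, flux src tgt [set x] v' = d' x.
  apply: (IH _ HF').
    have := dsum' [set: V]%SET; rewrite /dsum.
    under eq_bigr => x _ do rewrite inE mul1r.
    under [in X in _ = X -> _]eq_bigr => x _ do rewrite inE mul1r.
    by rewrite d0 /kf !inE subrr mul0r subr0.
  move=> X; rewrite dsum'; have HC := cut_restr c X eF; rewrite -/cF in HC.
  have HX := Hd X; move: HC; rewrite /kf.
  case uX: (src e \in X); case wX: (tgt e \in X) => /= HC.
  - lra.
  - have : c e + dsum d X - cut cF X <= L.
      by apply: le_bigmax_cond; rewrite uX wX.
    lra.
  - have : U <= cut cF X - dsum d X - c e.
      by apply: bigmin_le_cond; rewrite uX wX.
    lra.
  - lra.
exists (fun e' => v' e' + (e' == e)%:R * L); split.
  move=> e'; rewrite /cF (restr_split c eF); case: (eqVneq e' e) => [->|ne].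
    have := Hv'1 e; rewrite /restr !inE eqxx /= normr_le0 => /eqP ->.
    rewrite mul1r add0r ler_norml; lra.
  rewrite /= !mul0r !addr0; exact: Hv'1.
by move=> x; rewrite flux_pick Hv'2 /d' subrK.
Qed.

End Basic.


Definition o0 : 'I_3 := @Ordinal 3 0 isT.
Definition o1 : 'I_3 := @Ordinal 3 1 isT.
Definition o2 : 'I_3 := @Ordinal 3 2 isT.

Lemma ord3P (i : 'I_3) : i = o0 \/ i = o1 \/ i = o2.
Proof.
case: i => [[|[|[|n]]] Hi]; [left|right;left|right;right|by []]; exact: val_inj.
Qed.

Lemma sum3E (R : realType) (F : 'I_3 -> R) : \sum_i F i = F o0 + F o1 + F o2.
Proof.
rewrite (bigD1 o0) //= (bigD1 o1) //= (bigD1 o2) //= big1 ?addr0 ?addrA //.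
by move=> i; case: (ord3P i) => [->|[->|->]].
Qed.

Section Three.
Variables (R : realType) (V E : finType) (src tgt : E -> V) (A : 'I_3 -> V).
Hypothesis Ainj : injective A.
Let bd := [set A i | i : 'I_3].

Definition sep (k : 'I_3) (Y : {set V}) := forall t, (A t \in Y) = (t == k).

Lemma A_in t : A t \in bd.
Proof. by apply/imsetP; exists t. Qed.

Lemma flux_sep (v : E -> R) k Y : cons src tgt bd v -> sep k Y ->
  flux src tgt Y v = flux src tgt [set A k] v.
Proof.
move=> Hv HY; rewrite flux_part (bigD1 (A k)) /=; last by rewrite HY eqxx.
rewrite big1 ?addr0 // => x /andP[xY xk]; apply: Hv; apply/negP => /imsetP[t _ xt].
by move: xY xk; rewrite xt HY => /eqP ->; rewrite eqxx.
Qed.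

Lemma sum3 (v : E -> R) : cons src tgt bd v ->
  flux src tgt [set A o0] v + flux src tgt [set A o1] v + flux src tgt [set A o2] v = 0.
Proof.
move=> Hv; rewrite -(sum3E (fun i => flux src tgt [set A i] v)).
rewrite -[RHS](flux_setT src tgt v) flux_part (bigID (fun x => x \in bd)) /=.
rewrite [X in _ = _ + X]big1 ?addr0; last by move=> x /andP[_ xb]; apply: Hv.
rewrite (eq_bigl (fun x => x \in bd)); last by move=> x; rewrite inE.
by rewrite big_imset //= => x y _ _; apply: Ainj.
Qed.

Lemma mf_ge (c : E -> R) Z v : is_flow src tgt bd c v ->
  flux src tgt Z v <= maxflux src tgt bd c Z.
Proof.
move=> fv; apply: ub_le_sup; last by exists v.
exists (cut src tgt c Z) => r [w /is_flowP [fw _] <-]; exact: flux_le_cut.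
Qed.

Lemma mf_le (c : E -> R) Z b v0 : is_flow src tgt bd c v0 ->
  (forall v, is_flow src tgt bd c v -> flux src tgt Z v <= b) ->
  maxflux src tgt bd c Z <= b.
Proof.
move=> f0 H; apply: ge_sup; first by exists (flux src tgt Z v0), v0.
by move=> r [v fv <-]; apply: H.
Qed.


Lemma is_flowN (c v : E -> R) : is_flow src tgt bd c v -> is_flow src tgt bd c (fun e => - v e).
Proof.
move/is_flowP => [H1 H2]; apply/is_flowP; split => [e|x xb]; first by rewrite normrN.
by rewrite fluxN H2 ?oppr0.
Qed.

Lemma third (i j k t : 'I_3) : i != j -> i != k -> j != k -> t = i \/ t = j \/ t = k.
Proof.
by case: (ord3P i) => [->|[->|->]]; case: (ord3P j) => [->|[->|->]]; case: (ord3P k) => [->|[->|->]];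
  case: (ord3P t) => [->|[->|->]]; auto.
Qed.

Lemma sum3g (v : E -> R) i j k : i != j -> i != k -> j != k -> cons src tgt bd v ->
  flux src tgt [set A i] v + flux src tgt [set A j] v + flux src tgt [set A k] v = 0.
Proof.
move=> ij ik jk /sum3; move: ij ik jk.
by case: (ord3P i) => [->|[->|->]]; case: (ord3P j) => [->|[->|->]]; case: (ord3P k) => [->|[->|->]] //= _ _ _; lra.
Qed.

Lemma flux2 (v : E -> R) i j : i != j ->
  flux src tgt [set A i; A j] v = flux src tgt [set A i] v + flux src tgt [set A j] v.
Proof.
move=> ij; rewrite flux_part big_setU1 ?big_set1 //=.
by rewrite inE (inj_eq Ainj).
Qed.

Lemma pair_mf (c : E -> R) i j k : i != j -> i != k -> j != k ->
  maxflux src tgt bd c [set A i; A j] = maxflux src tgt bd c [set A k].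
Proof.
move=> ij ik jk; rewrite /maxflux; congr sup.
apply/seteqP; split => r [v fv <-]; exists (fun e => - v e); try exact: is_flowN.
  have /is_flowP [_ cv] := fv.
  by rewrite fluxN flux2 //; have := sum3g ij ik jk cv; lra.
have /is_flowP [_ cv] := fv.
by rewrite flux2 // !fluxN; have := sum3g ij ik jk cv; lra.
Qed.


Lemma sepC k Y : sep k Y -> forall t, (A t \in ~: Y) = ~~ (t == k).
Proof. by move=> H t; rewrite inE H. Qed.

Lemma gale3 (c : E -> R) (d : 'I_3 -> R) : (forall e, 0 <= c e) ->
  d o0 + d o1 + d o2 = 0 ->
  (forall k Y, sep k Y -> `|d k| <= cut src tgt c Y) ->
  exists v, is_flow src tgt bd c v /\ forall k, flux src tgt [set A k] v = d k.
Proof.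
move=> c0 dsum0 Hd.
pose D x := \sum_k (x == A k)%:R * d k.
have restrT : forall X, cut src tgt (restr [set: E]%SET c) X = cut src tgt c X.
  by move=> X; apply: eq_bigr => e _; rewrite /restr inE.
have DA : forall k, D (A k) = d k.
  move=> k; rewrite /D (bigD1 k) //= eqxx mul1r big1 ?addr0 // => k' /negbTE kk'.
  by rewrite (inj_eq Ainj) eq_sym kk' mul0r.
have Hsum : forall X, dsum D X = \sum_k (A k \in X)%:R * d k.
  move=> X; rewrite /dsum /D.
  under eq_bigr => x _ do rewrite mulr_sumr.
  rewrite exchange_big /=; apply: eq_bigr => k _.
  rewrite (bigD1 (A k)) //= eqxx mul1r big1 ?addr0 // => x /negbTE ->.
  by rewrite mul0r mulr0.
have key : forall k Y, sep k Y -> d k <= cut src tgt c Y /\ - d k <= cut src tgt c Y.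
  by move=> k Y /Hd; rewrite ler_norml => /andP[H1 H2]; split; lra.
have keyC : forall k (Y : {set V}), (forall t, (A t \in Y) = ~~ (t == k)) ->
    d k <= cut src tgt c Y /\ - d k <= cut src tgt c Y.
  move=> k Y HY; rewrite -cutC; apply: key => t; rewrite inE HY negbK //.
case: (@gale R V E src tgt c c0 _ [set: E]%SET (erefl _) D) => [||v [Hv1 Hv2]].
    rewrite /D exchange_big /=.
    rewrite -[RHS]dsum0 -sum3E; apply: eq_bigr => k _.
    rewrite -mulr_suml (bigD1 (A k)) //= eqxx big1 ?addr0 ?mul1r // => x /negbTE ->.
    by [].
  move=> X; rewrite restrT Hsum sum3E.
  have cX := cut_ge0 src tgt X c0.
  case b0: (A o0 \in X); case b1: (A o1 \in X); case b2: (A o2 \in X);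
    rewrite /= ?mul1r ?mul0r ?add0r ?addr0.
  - lra.
  - have [] := keyC o2 X; first by move=> t; case: (ord3P t) => [->|[->|->]].
    lra.
  - have [] := keyC o1 X; first by move=> t; case: (ord3P t) => [->|[->|->]].
    lra.
  - have [] := key o0 X; first by move=> t; case: (ord3P t) => [->|[->|->]].
    lra.
  - have [] := keyC o0 X; first by move=> t; case: (ord3P t) => [->|[->|->]].
    lra.
  - have [] := key o1 X; first by move=> t; case: (ord3P t) => [->|[->|->]].
    lra.
  - have [] := key o2 X; first by move=> t; case: (ord3P t) => [->|[->|->]].
    lra.
  - lra.
exists v; split; last by move=> k; rewrite Hv2 DA.
apply/is_flowP; split.
  by move=> e; have := Hv1 e; rewrite /restr inE.
move=> x xb; rewrite Hv2 /D big1 // => k _.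
case: eqP => [xk|]; last by rewrite mul0r.
by move: xb; rewrite xk A_in.
Qed.


Lemma fin_argmin (T : finType) (P : pred T) (f : T -> R) x0 : P x0 ->
  exists x, P x /\ forall y, P y -> f x <= f y.
Proof. by move=> P0; case: (@arg_minP _ _ T x0 P f P0) => x Px H; exists x. Qed.

Lemma mincut (c : E -> R) k : exists X, sep k X /\ forall Y, sep k Y -> cut src tgt c X <= cut src tgt c Y.
Proof.
pose P := fun Y : {set V} => [forall t, (A t \in Y) == (t == k)].
have PP : forall Y, P Y <-> sep k Y.
  move=> Y; split => [/forallP H t | H]; first exact/eqP.
  by apply/forallP => t; rewrite H.
have [|X [PX HX]] := @fin_argmin _ P (cut src tgt c) [set A k].
  by apply/PP => t; rewrite inE (inj_eq Ainj).
by exists X; split; [exact/PP | move=> Y /PP; apply: HX].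
Qed.

Lemma padj_sym (c : E -> R) : symmetric (padj src tgt c).
Proof.
move=> x y; apply: eq_existsb => e; by rewrite orbC.
Qed.

Lemma pkg (c f : E -> R) (a : R) i j k (Xi Xj Xk : {set V}) :
  i != j -> i != k -> j != k -> (forall e, 0 <= c e) ->
  is_flow src tgt bd c f -> flux src tgt [set A i] f = a ->
  sep i Xi -> sep j Xj -> sep k Xk ->
  (forall e, (src e \in Xk) != (tgt e \in Xk) -> c e = 0) ->
  cut src tgt c Xi <= a -> cut src tgt c Xj <= a ->
  [/\ maxflux src tgt bd c [set A i] = a, maxflux src tgt bd c [set A j] = a,
      maxflux src tgt bd c [set A k] = 0, maxflux src tgt bd c [set A i; A j] = 0 &
      forall x y, x \in bd -> y \in bd -> x != y -> connect (padj src tgt c) x y ->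
        [set x; y] = [set A i; A j]].
Proof.
move=> ij ik jk c0 ff ffa si sj sk ck cuti cutj.
have /is_flowP [fb fc] := ff.
have cutk : cut src tgt c Xk = 0 by apply: cut_zero.
have fk : flux src tgt [set A k] f = 0.
  have h1 := flux_le_cut src tgt Xk fb.
  have h2 : flux src tgt Xk (fun e => - f e) <= cut src tgt c Xk.
    by apply: flux_le_cut => e; rewrite normrN.
  rewrite fluxN (flux_sep fc sk) in h2; rewrite (flux_sep fc sk) in h1; lra.
have fj : flux src tgt [set A j] f = - a by have := sum3g ij ik jk fc; lra.
have ub : forall X l, sep l X -> maxflux src tgt bd c [set A l] <= cut src tgt c X.
  move=> X l sl; apply: (mf_le ff) => v /is_flowP [vb vc].
  by rewrite -(flux_sep vc sl); apply: flux_le_cut.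
have mk : maxflux src tgt bd c [set A k] = 0.
  apply/le_anti; rewrite -{1}cutk ub //= -fk; exact: mf_ge.
split => //.
- apply/le_anti; rewrite (le_trans (ub _ _ si)) //= -ffa; exact: mf_ge.
- apply/le_anti; rewrite (le_trans (ub _ _ sj)) //=.
  by have := mf_ge [set A j] (is_flowN ff); rewrite fluxN fj opprK.
- by rewrite (pair_mf _ ij ik jk).
move=> x y /imsetP[p _ ->] /imsetP[q _ ->] xy.
have cl : closed (padj src tgt c) Xk.
  move=> u w /existsP[e /andP[ce H]].
  have : (src e \in Xk) = (tgt e \in Xk).
    by apply/eqP; apply: contraTT ce => /ck ->; rewrite ltxx.
  by case/orP: H => /andP[/eqP -> /eqP ->].
move/(closed_connect cl); rewrite !sk.
have pq : p != q by apply: contraNneq xy => ->.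
move: pq; case: (third p ij ik jk) => [->|[->|->]]; case: (third q ij ik jk) => [->|[->|->]];
  rewrite ?eqxx ?(negbTE ik) ?(negbTE jk) //= => _ _.
by rewrite finset.setUC.
Qed.


Lemma hu (x y b : R) : `|x| <= b -> `|y| <= b ->
  `|2^-1 * x + 2^-1 * y| + `|2^-1 * x + (- 2^-1) * y| <= b.
Proof.
rewrite !ler_norml => /andP[x1 x2] /andP[y1 y2].
case: (lerP 0 (2^-1 * x + 2^-1 * y)) => h1; case: (lerP 0 (2^-1 * x + (- 2^-1) * y)) => h2.
- rewrite !ger0_norm //; lra.
- rewrite ger0_norm // ltr0_norm //; lra.
- rewrite ltr0_norm // ger0_norm //; lra.
- rewrite !ltr0_norm //; lra.
Qed.

Lemma cons_lin (v w : E -> R) a b : cons src tgt bd v -> cons src tgt bd w ->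
  cons src tgt bd (fun e => a * v e + b * w e).
Proof. by move=> Hv Hw x xb; rewrite flux_lin Hv ?Hw // !mulr0 addr0. Qed.

Lemma abs_cut (f : E -> R) k Y : cons src tgt bd f -> sep k Y ->
  `|flux src tgt [set A k] f| <= cut src tgt (fun e => `|f e|) Y.
Proof.
move=> fc sk; rewrite ler_norml; apply/andP; split.
  have := flux_le_cut src tgt Y (v := fun e => - f e) (c := fun e => `|f e|).
  rewrite fluxN (flux_sep fc sk) => H.
  have : - flux src tgt [set A k] f <= cut src tgt (fun e => `|f e|) Y by apply: H => e; rewrite normrN.
  lra.
rewrite -(flux_sep fc sk); exact: flux_le_cut.
Qed.

Lemma sat (c v r : E -> R) k Y : cons src tgt bd v -> sep k Y ->
  (forall e, `|v e| + r e <= c e) -> (forall e, 0 <= r e) ->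
  cut src tgt c Y <= flux src tgt [set A k] v ->
  forall e, (src e \in Y) != (tgt e \in Y) -> r e = 0.
Proof.
move=> vc sk H r0 Hc; apply: cut_eq0 => //.
have h1 := abs_cut vc sk.
have h2 : cut src tgt (fun e => `|v e| + r e) Y <= cut src tgt c Y by apply: cut_le.
rewrite cutD in h2.
have := ler_norm (flux src tgt [set A k] v); lra.
Qed.


Lemma mf_eq (c v : E -> R) k X : is_flow src tgt bd c v -> sep k X ->
  cut src tgt c X <= flux src tgt [set A k] v -> maxflux src tgt bd c [set A k] = cut src tgt c X.
Proof.
move=> fv sk H; apply/le_anti/andP; split.
  apply: (mf_le fv) => w /is_flowP [wb wc].
  by rewrite -(flux_sep wc sk); apply: flux_le_cut.
by apply: le_trans H _; apply: mf_ge.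
Qed.

End Three.


Definition mk3 (R : Type) (a b c : R) (t : 'I_3) : R :=
  if val t == 0%N then a else if val t == 1%N then b else c.

Arguments mk3 {R} a b c t /.

Section Main.
Variables (R : realType) (V E : finType) (src tgt : E -> V) (A : 'I_3 -> V).
Hypothesis Ainj : injective A.
Let bd := [set A i | i : 'I_3].
Local Notation Fl k v := (flux src tgt [set A k] v).

Lemma construct (c : E -> R) : (forall e, 0 <= c e) ->
  exists (X0 X1 X2 : {set V}) (f01 f02 q l : E -> R),
  (sep A o0 X0 /\ sep A o1 X1 /\ sep A o2 X2) /\
  (cons src tgt bd f01 /\ cons src tgt bd f02 /\ cons src tgt bd q) /\
  (forall e, 0 <= l e) /\ (forall e, `|f01 e| + `|f02 e| + `|q e| + l e = c e) /\
  let a01 := 2^-1 * (cut src tgt c X0 + cut src tgt c X1 - cut src tgt c X2) in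
  let a02 := 2^-1 * (cut src tgt c X0 + cut src tgt c X2 - cut src tgt c X1) in
  let a12 := 2^-1 * (cut src tgt c X1 + cut src tgt c X2 - cut src tgt c X0) in
  (Fl o0 f01 = a01 /\ Fl o1 f01 = - a01 /\ Fl o2 f01 = 0) /\
  (Fl o0 f02 = a02 /\ Fl o1 f02 = 0 /\ Fl o2 f02 = - a02) /\
  (Fl o0 q = 0 /\ Fl o1 q = a12 /\ Fl o2 q = - a12).
Proof.
move=> c0.
have [X0 [s0 min0]] := mincut src tgt Ainj c o0.
have [X1 [s1 min1]] := mincut src tgt Ainj c o1.
have [X2 [s2 min2]] := mincut src tgt Ainj c o2.
have [m0 m0E] : exists m, cut src tgt c X0 = m by eexists.
have [m1 m1E] : exists m, cut src tgt c X1 = m by eexists.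
have [m2 m2E] : exists m, cut src tgt c X2 = m by eexists.
have m0p : 0 <= m0 by rewrite -m0E; apply: cut_ge0.
have m1p : 0 <= m1 by rewrite -m1E; apply: cut_ge0.
have m2p : 0 <= m2 by rewrite -m2E; apply: cut_ge0.
have sa2 : m2 <= m0 + m1.
  have s : sep A o2 (~: (X0 :|: X1)).
    by move=> t; rewrite !inE s0 s1; case: (ord3P t) => [->|[->|->]].
  rewrite -m0E -m1E -m2E; apply: le_trans (min2 _ s) _; rewrite cutC; exact: cut_union.
have sa0 : m0 <= m1 + m2.
  have s : sep A o0 (~: (X1 :|: X2)).
    by move=> t; rewrite !inE s1 s2; case: (ord3P t) => [->|[->|->]].
  rewrite -m0E -m1E -m2E; apply: le_trans (min0 _ s) _; rewrite cutC; exact: cut_union.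
have sa1 : m1 <= m0 + m2.
  have s : sep A o1 (~: (X0 :|: X2)).
    by move=> t; rewrite !inE s0 s2; case: (ord3P t) => [->|[->|->]].
  rewrite -m0E -m1E -m2E; apply: le_trans (min1 _ s) _; rewrite cutC; exact: cut_union.
have minc : forall k Y, sep A k Y -> mk3 m0 m1 m2 k <= cut src tgt c Y.
  move=> k Y; case: (ord3P k) => [->|[->|->]] /= sk.
  - by rewrite -m0E; apply: min0.
  - by rewrite -m1E; apply: min1.
  - by rewrite -m2E; apply: min2.
case: (gale3 (src:=src) (tgt:=tgt) Ainj (c := c) (d := mk3 m0 (m2 - m0) (- m2)) c0) => [|k Y sk|g [gf gv]].
- rewrite /=; lra.
- have := minc k Y sk; rewrite ler_norml; move: sk; case: (ord3P k) => [->|[->|->]] /= _ H;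
    apply/andP; split; lra.
case: (gale3 (src:=src) (tgt:=tgt) Ainj (c := c) (d := mk3 m0 (- m1) (m1 - m0)) c0) => [|k Y sk|h [hf hv]].
- rewrite /=; lra.
- have := minc k Y sk; rewrite ler_norml; move: sk; case: (ord3P k) => [->|[->|->]] /= _ H;
    apply/andP; split; lra.
have /is_flowP [gb gc] := gf.
have /is_flowP [hb hc] := hf.
pose p e := 2^-1 * g e + 2^-1 * h e.
pose q e := 2^-1 * g e + (- 2^-1) * h e.
have pc : cons src tgt bd p by apply: cons_lin.
have qc : cons src tgt bd q by apply: cons_lin.
have pv : forall k, Fl k p = 2^-1 * Fl k g + 2^-1 * Fl k h by move=> k; apply: flux_lin.
have qv : forall k, Fl k q = 2^-1 * Fl k g + (- 2^-1) * Fl k h by move=> k; apply: flux_lin.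
have hpq : forall e, `|p e| + `|q e| <= c e by move=> e; apply: hu.
have [a01 a01E] : exists a : R, a = 2^-1 * (m0 + m1 - m2) by eexists.
have [a02 a02E] : exists a : R, a = 2^-1 * (m0 + m2 - m1) by eexists.
have [a12 a12E] : exists a : R, a = 2^-1 * (m1 + m2 - m0) by eexists.
have a01p : 0 <= a01 by rewrite a01E; lra.
have a02p : 0 <= a02 by rewrite a02E; lra.
have a12p : 0 <= a12 by rewrite a12E; lra.
have p0 : Fl o0 p = m0 by rewrite pv !gv !hv /=; lra.
have p1 : Fl o1 p = - a01 by rewrite pv !gv !hv /=; lra.
have p2 : Fl o2 p = - a02 by rewrite pv !gv !hv /=; lra.
have q0 : Fl o0 q = 0 by rewrite qv !gv !hv /=; lra.
have q1 : Fl o1 q = a12 by rewrite qv !gv !hv /=; lra.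
have q2 : Fl o2 q = - a12 by rewrite qv !gv !hv /=; lra.
case: (gale3 (src:=src) (tgt:=tgt) Ainj (c := fun e => `|p e|) (d := mk3 (a01 - a02) (- a01) a02))
  => [e|||p3 [p3f p3v]].
- exact: normr_ge0.
- rewrite /=; lra.
- move=> k Y sk; have := abs_cut pc sk; rewrite !ler_norml.
  move: sk; case: (ord3P k) => [->|[->|->]] /= _; rewrite ?p0 ?p1 ?p2 => /andP[H1 H2];
    apply/andP; split; lra.
have /is_flowP [p3b p3c] := p3f.
pose f01 e := 2^-1 * p e + 2^-1 * p3 e.
pose f02 e := 2^-1 * p e + (- 2^-1) * p3 e.
have f01c : cons src tgt bd f01 by apply: cons_lin.
have f02c : cons src tgt bd f02 by apply: cons_lin.
have hf2 : forall e, `|f01 e| + `|f02 e| <= `|p e| by move=> e; apply: hu.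
pose l e := c e - `|f01 e| - `|f02 e| - `|q e|.
have l0 : forall e, 0 <= l e by move=> e; have := hf2 e; have := hpq e; rewrite /l; lra.
have fv : forall k, Fl k f01 = 2^-1 * Fl k p + 2^-1 * Fl k p3 /\
     Fl k f02 = 2^-1 * Fl k p + (- 2^-1) * Fl k p3 by move=> k; split; apply: flux_lin.
have [f010 f020] := fv o0.
have [f011 f021] := fv o1.
have [f012 f022] := fv o2.
rewrite p0 p3v /= in f010 f020; rewrite p1 p3v /= in f011 f021; rewrite p2 p3v /= in f012 f022.
have {}f010 : Fl o0 f01 = a01 by rewrite f010; lra.
have {}f011 : Fl o1 f01 = - a01 by rewrite f011; lra.
have {}f012 : Fl o2 f01 = 0 by rewrite f012; lra.
have {}f020 : Fl o0 f02 = a02 by rewrite f020; lra.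
have {}f021 : Fl o1 f02 = 0 by rewrite f021; lra.
have {}f022 : Fl o2 f02 = - a02 by rewrite f022; lra.
exists X0, X1, X2, f01, f02, q, l.
rewrite m0E m1E m2E -a01E -a02E -a12E.
split; first by [].
split; first by [].
split; first by [].
split; first by move=> e; rewrite /l; lra.
by repeat split.
Qed.
End Main.


Lemma sum3c (R : realType) (P : pred 'I_3) (F : 'I_3 -> R) :
  \sum_(j < 3 | P j) F j = (if P o0 then F o0 else 0) + (if P o1 then F o1 else 0) + (if P o2 then F o2 else 0).
Proof. by rewrite big_mkcond sum3E. Qed.

Section Fin.
Variables (R : realType) (V E : finType) (src tgt : E -> V) (A : 'I_3 -> V).
Hypothesis Ainj : injective A.
Let bd := [set A i | i : 'I_3].
Local Notation Fl k v := (flux src tgt [set A k] v).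

Lemma final (c : E -> R) : (forall e, 0 <= c e) ->
  exists cs : 'I_3 -> 'I_3 -> E -> R,
    (forall i j : 'I_3, (i < j)%N -> forall e, 0 <= cs i j e) /\
    (forall e, \sum_(i < 3) \sum_(j < 3 | (i < j)%N) cs i j e = c e) /\
    (forall i j : 'I_3, (i < j)%N ->
       maxflux src tgt bd (cs i j) [set A i] = mutinf src tgt bd c (A i) (A j) / 2 /\
       maxflux src tgt bd (cs i j) [set A j] = mutinf src tgt bd c (A i) (A j) / 2 /\
       (forall k : 'I_3, k != i -> k != j ->
          maxflux src tgt bd (cs i j) [set A k] = 0)) /\
    (forall i j : 'I_3, (i < j)%N -> forall x y : V,
       x \in bd -> y \in bd -> x != y ->
       connect (padj src tgt (cs i j)) x y -> [set x; y] = [set A i; A j]) /\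
    (forall k : 'I_3,
       \sum_(i < 3) \sum_(j < 3 | (i < j)%N) maxflux src tgt bd (cs i j) [set A k]
       = maxflux src tgt bd c [set A k]) /\
    (forall i j : 'I_3, (i < j)%N ->
       mutinf src tgt bd (cs i j) (A i) (A j) = mutinf src tgt bd c (A i) (A j)).
Proof.
move=> c0.
have [X0 [X1 [X2 [f01 [f02 [q [l [[s0 [s1 s2]] [[f01c [f02c qc]] [l0 [lE H]]]]]]]]]]] :=
  construct src tgt Ainj c0.
have [m0 m0E] : exists m, cut src tgt c X0 = m by eexists.
have [m1 m1E] : exists m, cut src tgt c X1 = m by eexists.
have [m2 m2E] : exists m, cut src tgt c X2 = m by eexists.
rewrite m0E m1E m2E /= in H.
have [a01 a01E] : exists a : R, a = 2^-1 * (m0 + m1 - m2) by eexists.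
have [a02 a02E] : exists a : R, a = 2^-1 * (m0 + m2 - m1) by eexists.
have [a12 a12E] : exists a : R, a = 2^-1 * (m1 + m2 - m0) by eexists.
rewrite -a01E -a02E -a12E in H.
move: H => [[f010 [f011 f012]] [[f020 [f021 f022]] [q0 [q1 q2]]]].
have nn : forall x : R, 0 <= `|x| := fun x => normr_ge0 x.
have z0 : forall e, (src e \in X0) != (tgt e \in X0) -> `|q e| + l e = 0.
  move=> e He.
  have b : forall e', `|1 * f01 e' + 1 * f02 e'| + (`|q e'| + l e') <= c e'.
    move=> e'; rewrite !mul1r -lE; have := ler_normD (f01 e') (f02 e'); lra.
  have r0 : forall e', 0 <= `|q e'| + l e' by move=> e'; have := l0 e'; have := nn (q e'); lra.
  have ct : cut src tgt c X0 <= Fl o0 (fun e => 1 * f01 e + 1 * f02 e).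
    by rewrite m0E flux_lin f010 f020 a01E a02E; lra.
  exact: (sat (cons_lin 1 1 f01c f02c) s0 b r0 ct He).
have z1 : forall e, (src e \in X1) != (tgt e \in X1) -> `|f02 e| + l e = 0.
  move=> e He.
  have b : forall e', `|(-1) * f01 e' + 1 * q e'| + (`|f02 e'| + l e') <= c e'.
    move=> e'; rewrite mul1r mulN1r -lE; have := ler_normD (- f01 e') (q e'); rewrite normrN; lra.
  have r0 : forall e', 0 <= `|f02 e'| + l e' by move=> e'; have := l0 e'; have := nn (f02 e'); lra.
  have ct : cut src tgt c X1 <= Fl o1 (fun e => (-1) * f01 e + 1 * q e).
    by rewrite m1E flux_lin f011 q1 a01E a12E; lra.
  exact: (sat (cons_lin (-1) 1 f01c qc) s1 b r0 ct He).
have z2 : forall e, (src e \in X2) != (tgt e \in X2) -> `|f01 e| + l e = 0.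
  move=> e He.
  have b : forall e', `|(-1) * f02 e' + (-1) * q e'| + (`|f01 e'| + l e') <= c e'.
    move=> e'; rewrite !mulN1r -lE; have := ler_normD (- f02 e') (- q e'); rewrite !normrN; lra.
  have r0 : forall e', 0 <= `|f01 e'| + l e' by move=> e'; have := l0 e'; have := nn (f01 e'); lra.
  have ct : cut src tgt c X2 <= Fl o2 (fun e => (-1) * f02 e + (-1) * q e).
    by rewrite m2E flux_lin f022 q2 a02E a12E; lra.
  exact: (sat (cons_lin (-1) (-1) f02c qc) s2 b r0 ct He).
have cl0 : cut src tgt l X0 = 0.
  by apply: cut_zero => e He; have := z0 e He; have := l0 e; have := nn (q e); lra.
have cl1 : cut src tgt l X1 = 0.
  by apply: cut_zero => e He; have := z1 e He; have := l0 e; have := nn (f02 e); lra.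
have call : forall X, cut src tgt (fun e => `|f01 e|) X + cut src tgt (fun e => `|f02 e|) X
     + cut src tgt (fun e => `|q e|) X <= cut src tgt c X.
  move=> X; rewrite -!cutD; apply: cut_le => e /=.
  by rewrite -lE; have := l0 e; lra.
have lb : forall (f : E -> R) k X, cons src tgt bd f -> sep A k X ->
    `|Fl k f| <= cut src tgt (fun e => `|f e|) X.
  by move=> f k X fc sk; apply: abs_cut.
have L01_0 := lb _ _ _ f01c s0; have L01_1 := lb _ _ _ f01c s1.
have L02_0 := lb _ _ _ f02c s0; have L02_2 := lb _ _ _ f02c s2.
have L12_1 := lb _ _ _ qc s1; have L12_2 := lb _ _ _ qc s2.
rewrite f010 in L01_0; rewrite f011 normrN in L01_1.
rewrite f020 in L02_0; rewrite f022 normrN in L02_2.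
rewrite q1 in L12_1; rewrite q2 normrN in L12_2.
have {}L01_0 := le_trans (ler_norm _) L01_0; have {}L01_1 := le_trans (ler_norm _) L01_1.
have {}L02_0 := le_trans (ler_norm _) L02_0; have {}L02_2 := le_trans (ler_norm _) L02_2.
have {}L12_1 := le_trans (ler_norm _) L12_1; have {}L12_2 := le_trans (ler_norm _) L12_2.
have C0 := call X0; have C1 := call X1; have C2 := call X2.
rewrite m0E in C0; rewrite m1E in C1; rewrite m2E in C2.
have G := fun (f : E -> R) X => cut_ge0 src tgt X (fun e => nn (f e)).
have isf : forall (cc f : E -> R), (forall e, `|f e| <= cc e) -> cons src tgt bd f ->
  is_flow src tgt bd cc f by move=> cc f H1 H2; apply/is_flowP.
have B01_0 : cut src tgt (fun e => `|f01 e| + l e) X0 <= a01.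
  by rewrite cutD cl0 addr0; have := G q X0; rewrite a01E; lra.
have B01_1 : cut src tgt (fun e => `|f01 e| + l e) X1 <= a01.
  by rewrite cutD cl1 addr0; have := G f02 X1; rewrite a01E; lra.
have B02_0 : cut src tgt (fun e => `|f02 e|) X0 <= a02.
  by have := G q X0; rewrite a02E; lra.
have B02_2 : cut src tgt (fun e => `|f02 e|) X2 <= a02.
  by have := G f01 X2; rewrite a02E; lra.
have B12_1 : cut src tgt (fun e => `|q e|) X1 <= a12.
  by have := G f02 X1; rewrite a12E; lra.
have B12_2 : cut src tgt (fun e => `|q e|) X2 <= a12.
  by have := G f01 X2; rewrite a12E; lra.
have [M01_0 M01_1 M01_2 M01_p M01_c] := @pkg R V E src tgt A Ainj (fun e => `|f01 e| + l e) f01 a01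
  o0 o1 o2 X0 X1 X2 isT isT isT
  (fun e => addr_ge0 (nn _) (l0 e))
  (isf _ _ (fun e => ler_wpDr (l0 e) (lexx _)) f01c)
  f010 s0 s1 s2 z2 B01_0 B01_1.
have [M02_0 M02_2 M02_1 M02_p M02_c] := @pkg R V E src tgt A Ainj (fun e => `|f02 e|) f02 a02
  o0 o2 o1 X0 X2 X1 isT isT isT
  (fun e => nn _) (isf _ _ (fun e => lexx _) f02c)
  f020 s0 s2 s1 (fun e He => ltac:(have := z1 e He; have := l0 e; have := nn (f02 e); lra))
  B02_0 B02_2.
have [M12_1 M12_2 M12_0 M12_p M12_c] := @pkg R V E src tgt A Ainj (fun e => `|q e|) q a12
  o1 o2 o0 X1 X2 X0 isT isT isT
  (fun e => nn _) (isf _ _ (fun e => lexx _) qc)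
  q1 s1 s2 s0 (fun e He => ltac:(have := z0 e He; have := l0 e; have := nn (q e); lra))
  B12_1 B12_2.
have S0 : maxflux src tgt bd c [set A o0] = m0.
  rewrite -m0E; apply: (mf_eq (v := fun e => 1 * f01 e + 1 * f02 e)) s0 _.
    apply: isf; last exact: cons_lin.
    by move=> e; rewrite !mul1r -lE; have := ler_normD (f01 e) (f02 e); have := l0 e; have := nn (q e); lra.
  by rewrite flux_lin f010 f020 m0E a01E a02E; lra.
have S1 : maxflux src tgt bd c [set A o1] = m1.
  rewrite -m1E; apply: (mf_eq (v := fun e => (-1) * f01 e + 1 * q e)) s1 _.
    apply: isf; last exact: cons_lin.
    move=> e; rewrite mul1r mulN1r -lE; have := ler_normD (- f01 e) (q e); rewrite normrN.
    by have := l0 e; have := nn (f02 e); lra.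
  by rewrite flux_lin f011 q1 m1E a01E a12E; lra.
have S2 : maxflux src tgt bd c [set A o2] = m2.
  rewrite -m2E; apply: (mf_eq (v := fun e => (-1) * f02 e + (-1) * q e)) s2 _.
    apply: isf; last exact: cons_lin.
    move=> e; rewrite !mulN1r -lE; have := ler_normD (- f02 e) (- q e); rewrite !normrN.
    by have := l0 e; have := nn (f01 e); lra.
  by rewrite flux_lin f022 q2 m2E a02E a12E; lra.
have I01 : mutinf src tgt bd c (A o0) (A o1) = 2 * a01.
  by rewrite /mutinf (pair_mf src tgt Ainj c (k := o2)) // S0 S1 S2 a01E; lra.
have I02 : mutinf src tgt bd c (A o0) (A o2) = 2 * a02.
  by rewrite /mutinf (pair_mf src tgt Ainj c (k := o1)) // S0 S1 S2 a02E; lra.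
have I12 : mutinf src tgt bd c (A o1) (A o2) = 2 * a12.
  by rewrite /mutinf (pair_mf src tgt Ainj c (k := o0)) // S0 S1 S2 a12E; lra.
exists (fun i j => if (val i == 0%N) && (val j == 1%N) then (fun e => `|f01 e| + l e)
  else if (val i == 0%N) && (val j == 2%N) then (fun e => `|f02 e|)
  else if (val i == 1%N) && (val j == 2%N) then (fun e => `|q e|) else (fun _ => 0)).
split.
  move=> i j; case: (ord3P i) => [->|[->|->]]; case: (ord3P j) => [->|[->|->]] //= _ e.
  - by have := l0 e; have := nn (f01 e); lra.
split.
  by move=> e; rewrite sum3E !sum3c /= -lE; lra.
split.
  move=> i j; case: (ord3P i) => [->|[->|->]]; case: (ord3P j) => [->|[->|->]] //= _.
  - rewrite I01 M01_0 M01_1; split; [lra | split; [lra|]].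
    by move=> k; case: (ord3P k) => [->|[->|->]].
  - rewrite I02 M02_0 M02_2; split; [lra | split; [lra|]].
    by move=> k; case: (ord3P k) => [->|[->|->]].
  - rewrite I12 M12_1 M12_2; split; [lra | split; [lra|]].
    by move=> k; case: (ord3P k) => [->|[->|->]].
split.
  by move=> i j; case: (ord3P i) => [->|[->|->]]; case: (ord3P j) => [->|[->|->]] //= _.
split.
  move=> k; rewrite sum3E !sum3c /=.
  case: (ord3P k) => [->|[->|->]].
  - by rewrite M01_0 M02_0 M12_0 S0 a01E a02E; lra.
  - by rewrite M01_1 M02_1 M12_1 S1 a01E a12E; lra.
  - by rewrite M01_2 M02_2 M12_2 S2 a02E a12E; lra.
move=> i j; case: (ord3P i) => [->|[->|->]]; case: (ord3P j) => [->|[->|->]] //= _.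
- by rewrite I01 /mutinf M01_0 M01_1 M01_p; lra.
- by rewrite I02 /mutinf M02_0 M02_2 M02_p; lra.
- by rewrite I12 /mutinf M12_1 M12_2 M12_p; lra.
Qed.
End Fin.

Theorem theorem4 (R : realType) (V E : finType) (src tgt : E -> V)
    (c : E -> R) (A : 'I_3 -> V) :
  (forall e, 0 <= c e) -> injective A ->
  let bd := [set A i | i : 'I_3] in
  exists cs : 'I_3 -> 'I_3 -> E -> R,
    (* decomposition into subnetworks Sigma_ij, i < j *)
    (forall i j : 'I_3, (i < j)%N -> forall e, 0 <= cs i j e) /\
    (forall e, \sum_(i < 3) \sum_(j < 3 | (i < j)%N) cs i j e = c e) /\
    (* main property *)
    (forall i j : 'I_3, (i < j)%N ->
       maxflux src tgt bd (cs i j) [set A i] = mutinf src tgt bd c (A i) (A j) / 2 /\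
       maxflux src tgt bd (cs i j) [set A j] = mutinf src tgt bd c (A i) (A j) / 2 /\
       (forall k : 'I_3, k != i -> k != j ->
          maxflux src tgt bd (cs i j) [set A k] = 0)) /\
    (* in particular: Sigma_ij connects only A_i and A_j *)
    (forall i j : 'I_3, (i < j)%N -> forall x y : V,
       x \in bd -> y \in bd -> x != y ->
       connect (padj src tgt (cs i j)) x y -> [set x; y] = [set A i; A j]) /\
    (* in particular: sum_{i<j} S_{Sigma_ij}(A_k) = S_Sigma(A_k) *)
    (forall k : 'I_3,
       \sum_(i < 3) \sum_(j < 3 | (i < j)%N) maxflux src tgt bd (cs i j) [set A k]
       = maxflux src tgt bd c [set A k]) /\
    (* in particular: I(A_i:A_j) on Sigma_ij equals that on Sigma *)
    (forall i j : 'I_3, (i < j)%N ->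
       mutinf src tgt bd (cs i j) (A i) (A j) = mutinf src tgt bd c (A i) (A j)).
Proof.
move=> c0 Ainj bd.
exact: (final src tgt Ainj c0).
Qed.
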